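(* Let $p \in \omega^*$ be a selective ultrafilter and consider the subspace $\{p\} \cup \omega$ of $\beta\omega$. Then $\mathsf{S}_1(\Omega_p, \Omega_p)$ holds in $\{p\}\cup\omega$, but $(\{p\} \cup \omega) \times S_{\mathfrak{c}}$ does not have countable tightness at $\langle p, 0\rangle$.
   Context: $\omega^* = \beta\omega \setminus \omega$ is the set of free ultrafilters on $\omega$; in $\{p\}\cup\omega$ the points of $\omega$ are isolated and the neighborhoods of $p$ are the sets $\{p\}\cup P$ with $P \in p$. A point $p \in \omega^*$ is a selective ultrafilter if for every partition $\{A_n : n < \omega\}$ of $\omega$ with $A_n \notin p$ for each $n$ there is $P \in p$ with $|P \cap A_n| = 1$ for each $n$. $\Omega_p$ is the collection of sets $A$ with $p \notin A$ and $p \in \overline{A}$; $\mathsf{S}_1(\Omega_p,\Omega_p)$ means that for every sequence $(A_n)_{n\in\omega}$ of elements of $\Omega_p$ one can select $a_n \in A_n$ with $\{a_n : n \in \omega\} \in \Omega_p$. $S_{\mathfrak{c}}$ is the sequential fan: the set $\{0\} \cup \bigcup_{\alpha < \mathfrak{c}} \{z_n^\alpha : n < \omega\}$ with all $z_n^\alpha$ distinct and isolated, and with basic neighborhoods of $0$ the sets $V(f) = \{0\} \cup \bigcup_{\alpha<\mathfrak{c}}\{z_n^\alpha : n \ge f(\alpha)\}$ for $f \in {}^{\mathfrak{c}}\omega$. A space $Z$ has countable tightness at $z$ if whenever $z \in \overline{A}$ there is a countable $B \subset A$ with $z \in \overline{B}$. *)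

(* Defs.v *)
From mathcomp Require Import all_boot.
From mathcomp Require Import boolp classical_sets cardinality.
Set Implicit Arguments. Unset Strict Implicit. Unset Printing Implicit Defensive.
Local Open Scope classical_set_scope.

Definition free_ultrafilter (p : set (set nat)) : Prop :=
  (p setT /\ ~ p set0) /\
  [/\ (forall A B, p A -> A `<=` B -> p B),
      (forall A B, p A -> p B -> p (A `&` B)),
      (forall A, p A \/ p (~` A)) &
      (forall A, finite_set A -> ~ p A)].

Definition selective (p : set (set nat)) : Prop :=
  forall A : nat -> set nat,
    (forall n, A n !=set0) ->
    (forall m n, m <> n -> A m `&` A n = set0) ->
    \bigcup_n A n = setT ->
    (forall n, ~ p (A n)) ->
    exists P, p P /\ forall n, exists k, P `&` A n = [set k].

(* Spaces given by neighbourhood bases: B x U means "U is a basic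
   neighbourhood of x". *)
Definition cl_by {T : Type} (B : T -> set T -> Prop) (A : set T) (x : T) : Prop :=
  forall U, B x U -> U `&` A !=set0.

Definition countably_tight_at {T : Type} (B : T -> set T -> Prop) (x : T) : Prop :=
  forall A : set T, cl_by B A x ->
    exists C : set T, [/\ C `<=` A, countable C & cl_by B C x].

(* The space {p} u omega: None is the point p, Some n is n. *)
Definition Xp := option nat.

Definition baseX (p : set (set nat)) (x : Xp) (U : set Xp) : Prop :=
  match x with
  | None => exists P, p P /\ U = [set None] `|` (Some @` P)
  | Some n => U = [set Some n]
  end.

Definition Omega_p (p : set (set nat)) (A : set Xp) : Prop :=
  ~ A None /\ cl_by (baseX p) A None.

Definition S1_Omega_p (p : set (set nat)) : Prop :=
  forall A : nat -> set Xp, (forall n, Omega_p p (A n)) ->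
    exists a : nat -> Xp, (forall n, A n (a n)) /\ Omega_p p (range a).

(* The sequential fan S_c. The index set c is represented by nat -> bool
   (a set of cardinality continuum); None is 0, Some (alpha, n) is z_n^alpha. *)
Definition cindex := nat -> bool.
Definition Sc := option (cindex * nat).

Definition Vfan (f : cindex -> nat) : set Sc :=
  [set None] `|` [set z | exists a n, z = Some (a, n) /\ (f a <= n)%N].

Definition baseSc (y : Sc) (U : set Sc) : Prop :=
  match y with
  | None => exists f : cindex -> nat, U = Vfan f
  | Some z => U = [set Some z]
  end.

Definition baseProd {S T : Type} (BS : S -> set S -> Prop) (BT : T -> set T -> Prop)
  (z : S * T) (W : set (S * T)) : Prop :=
  exists U V, [/\ BS z.1 U, BT z.2 V & W = U `*` V].

(* Main.v *)
Require Import Defs.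
From mathcomp Require Import all_boot.
From mathcomp Require Import boolp classical_sets cardinality.
Set Implicit Arguments. Unset Strict Implicit. Unset Printing Implicit Defensive.
Local Open Scope classical_set_scope.

Section UF.
Variable p : set (set nat).
Hypothesis Hp : free_ultrafilter p.

Lemma uf_up A B : p A -> A `<=` B -> p B.
Proof. by case: Hp => _ [h _ _ _]; apply: h. Qed.
Lemma uf_I A B : p A -> p B -> p (A `&` B).
Proof. by case: Hp => _ [_ h _ _]; apply: h. Qed.
Lemma uf_C A : p A \/ p (~` A).
Proof. by case: Hp => _ [_ _ h _]; apply: h. Qed.
Lemma uf_fin A : finite_set A -> ~ p A.
Proof. by case: Hp => _ [_ _ _ h]; apply: h. Qed.
Lemma uf_T : p setT. Proof. by case: Hp => [[]]. Qed.
Lemma uf_0 : ~ p set0. Proof. by case: Hp => [[]]. Qed.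

Lemma uf_ne A : p A -> A !=set0.
Proof.
move=> pA; apply: (contra_notP _ uf_0) => h. apply: (@uf_up A set0 pA) => x Ax; apply: h; by exists x.
Qed.

Lemma uf_compl A : ~ p A -> p (~` A).
Proof. by case: (uf_C A). Qed.

Lemma uf_disj A B : p A -> p B -> A `&` B = set0 -> False.
Proof. by move=> pA pB h; apply: uf_0; rewrite -h; apply: uf_I. Qed.

Lemma uf_notU A B : ~ p A -> ~ p B -> ~ p (A `|` B).
Proof.
move=> nA nB pU.
have := uf_I (uf_compl nA) (uf_compl nB).
move=> h; apply: (uf_disj pU h).
apply/seteqP; split => x //= [[Ax|Bx] [nAx nBx]]; by [apply: nAx|apply: nBx].
Qed.

Lemma uf_ge n : p [set x | (n <= x)%N].
Proof.
apply: (uf_up (uf_compl (uf_fin (finite_II n)))) => x /=.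
by move=> h; rewrite leqNgt; apply/negP.
Qed.

Lemma uf_big N P : p P -> exists x, P x /\ (N < x)%N.
Proof.
move=> pP; have [x [Px Nx]] := uf_ne (uf_I pP (uf_ge N.+1)).
by exists x.
Qed.

Lemma sel_inj (g : nat -> nat) : selective p ->
  (forall n, ~ p (g @^-1` [set n])) ->
  exists P, p P /\ forall x y, P x -> P y -> g x = g y -> x = y.
Proof.
move=> Hsel Hg.
have [b nS] : exists b, ~ p [set x | odd x = b].
  case: (uf_C [set x | odd x = true]) => h; last by exists true => h'; apply: (uf_disj h h'); apply/seteqP; split => x //= [].
  exists false => h'; apply: (uf_disj h h'); apply/seteqP; split => x //= [] ->; discriminate.
pose h x := if odd x == b then x./2 else g x.
pose A n := h @^-1` [set n].
have [P [pP HP]] : exists P, p P /\ forall n, exists k, P `&` A n = [set k].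
  apply: Hsel.
  - move=> n; exists (b + n.*2)%N; rewrite /A /h /=.
    by rewrite oddD oddb odd_double addbF eqxx half_bit_double.
  - move=> m n mn; apply/seteqP; split => x // [/= hm hn]; apply: mn; by rewrite -hm -hn.
  - by apply/seteqP; split => x // _; exists (h x).
  - move=> n pA; apply: (@uf_notU [set x | odd x = b] (g @^-1` [set n]) nS (Hg n)).
    apply: (uf_up pA) => x; rewrite /A /h /=; case: eqP => [<-|_]; first by left.
    by right.
exists (P `&` ~` [set x | odd x = b]); split; first exact: uf_I pP (uf_compl nS).
move=> x y [Px Sx] [Py Sy] gxy.
have [k Hk] := HP (g x).
have hx : h x = g x by rewrite /h; case: eqP.
have hy : h y = g y by rewrite /h; case: eqP.
have : (P `&` A (g x)) x by split => //; rewrite /A /= hx.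
have : (P `&` A (g x)) y by split => //; rewrite /A /= hy gxy.
by rewrite Hk => /= -> ->.
Qed.

Lemma sel_seq (B : nat -> set nat) : selective p -> (forall n, p (B n)) ->
  exists a : nat -> nat, (forall n, B n (a n)) /\ p (range a).
Proof.
move=> Hsel pB.
pose C n := B n `&` [set x | (n <= x)%N].
have pC n : p (C n) by apply: uf_I (pB n) (uf_ge n).
have ex x : exists n, ~ C n x /\ forall m, (m < n)%N -> C m x.
  have ex0 : exists n, `[< ~ C n x >] by exists x.+1; apply/asboolP => -[_]; rewrite /= ltnn.
  case: (ex_minnP ex0) => n /asboolP Hn Hmin; exists n; split => // m mn.
  case: (pselect (C m x)) => // nC; have := Hmin m (introT (asboolP _) nC); by rewrite leqNgt mn.
have [g Hg] := choice ex.
have [P [pP Pinj]] : exists P, p P /\ forall x y, P x -> P y -> g x = g y -> x = y.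
  apply: sel_inj Hsel _ => n pF; apply: uf_0; apply: (uf_up (uf_I pF (pC n))) => x [/= gx Cx].
  by case: (Hg x) => + _; rewrite gx.
pose Q := P `&` C 0.
have pQ : p Q by apply: uf_I.
have exa n : exists y, C n y /\ ((exists x, Q x /\ g x = n.+1) -> Q y /\ g y = n.+1).
  case: (pselect (exists x, Q x /\ g x = n.+1)) => [[x [Qx gx]]|nx].
    exists x; split => //; case: (Hg x) => _; apply; by rewrite gx.
  have [y Cy] := uf_ne (pC n); by exists y.
have [a Ha] := choice exa.
exists a; split; first by move=> n; case: (Ha n) => -[].
apply: (uf_up pQ) => x Qx.
case E: (g x) => [|n].
  by case: (Hg x) => + _; rewrite E; case: Qx.
case: (Ha n) => _ /(_ (ex_intro _ x (conj Qx E))) [Qa ga].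
exists n => //; apply: Pinj; [by case: Qa|by case: Qx|by rewrite ga E].
Qed.

Lemma part1 : selective p -> S1_Omega_p p.
Proof.
move=> Hsel A HA.
pose B n := [set k | A n (Some k)].
have pB n : p (B n).
  case: (uf_C (B n)) => // h; exfalso.
  case: (HA n) => nN /(_ ([set None] `|` (Some @` (~` B n)))).
  case; first by exists (~` B n).
  move=> z [[->|[k /= nk <-]]] //.
have [a [Ba pa]] := sel_seq Hsel pB.
exists (fun n => Some (a n)); split => //; split; first by case.
move=> U [P [pP ->]].
have [x [Px [n _ xe]]] := uf_ne (uf_I pP pa); subst x.
exists (Some (a n)); split; last by exists n.
by right; exists (a n).
Qed.


Definition alpha_of (z : Xp * Sc) : cindex :=
  match z.2 with Some (al, _) => al | None => fun _ => false end.

Lemma part2 : selective p ->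
  ~ countably_tight_at (baseProd (baseX p) baseSc) (None, None).
Proof.
move=> Hsel H.
pose A := [set z : Xp * Sc | exists (al : cindex) n,
  z = (Some n, Some (al, n)) /\ al n /\ ~ p [set m | al m]].
have clA : cl_by (baseProd (baseX p) baseSc) A (None, None).
  move=> W [U [V [/= [P [pP ->]] [f ->] ->]]].
  have [nx Hnx] := choice (fun N => uf_big N pP).
  pose s := fix s k := if k is k'.+1 then nx (s k') else nx 0.
  have sP k : P (s k) by case: k => [|k]; [case: (Hnx 0)|case: (Hnx (s k))].
  have sinc k : (s k < s k.+1)%N by case: (Hnx (s k)).
  have sge k : (k <= s k)%N.
    elim: k => // k IH; exact: leq_ltn_trans IH (sinc k).
  have smono i j : (i < j)%N -> (s i < s j)%N.
    elim: j => // j IH; rewrite ltnS leq_eqVlt => /orP [/eqP ->|/IH h] //.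
    exact: ltn_trans h (sinc j).
  have sinj i j : s i = s j -> i = j.
    move=> e; case: (ltngtP i j) => // [/smono|/smono]; by rewrite e ltnn.
  have [b nW] : exists b : bool, ~ p [set x | exists k, x = s (b + k.*2)].
    have disj : [set x | exists k, x = s (false + k.*2)] `&` [set x | exists k, x = s (true + k.*2)] = set0.
      apply/seteqP; split => x // [[k ->] [j /sinj e]].
      by have := congr1 odd e; rewrite !oddD !oddb !odd_double.
    case: (pselect (p [set x | exists k, x = s (false + k.*2)])) => h.
      by exists true => h'; apply: (uf_disj h h' disj).
    by exists false.
  pose al := fun n => `[< exists k, n = s (b + k.*2) >].
  pose x := s (b + (f al).*2).
  have fx : (f al <= x)%N.
    apply: (leq_trans _ (sge (b + (f al).*2))); by rewrite -addnn addnA leq_addl.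
  exists (Some x, Some (al, x)); split.
    split => /=; first by right; exists x => //; apply: sP.
    by right; exists al, x.
  exists al, x; split => //; split; first by apply/asboolP; exists (f al).
  by move=> pal; apply: nW; apply: (uf_up pal) => m /asboolP.
have [C [CA cC clC]] := H A clA.
have [phi phiinj] := countable_injP _ cC.
have exe k : exists al : cindex, (exists z, C z /\ phi z = k) ->
    exists z, [/\ C z, phi z = k & alpha_of z = al].
  case: (pselect (exists z, C z /\ phi z = k)) => [[z [Cz ez]]|nz].
    by exists (alpha_of z) => _; exists z.
  by exists (fun _ => false).
have [e He] := choice exe.
pose Y k := [set m | p [set m | e k m] \/ ~ e k m].
have pY k : p (Y k).
  case: (pselect (p [set m | e k m])) => h.
    by apply: (uf_up uf_T) => m _; left.
  by apply: (uf_up (uf_compl h)) => m nm; right.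
pose Bn n := [set m | forall k, (k <= n)%N -> Y k m].
have pBn n : p (Bn n).
  elim: n => [|n IH].
    by apply: (uf_up (pY 0)) => m Ym k; rewrite leqn0 => /eqP ->.
  apply: (uf_up (uf_I IH (pY n.+1))) => m [h1 h2] k.
  by rewrite leq_eqVlt => /orP [/eqP ->|]; last by rewrite ltnS; apply: h1.
have [a [Ba pa]] := sel_seq Hsel pBn.
have exk al : exists k, (exists k', e k' = al) -> e k = al.
  case: (pselect (exists k', e k' = al)) => [[k' ek]|nk]; first by exists k'.
  by exists 0.
have [kf Hkf] := choice exk.
pose f al := (\max_(i < kf al) a i).+1.
have [z [Wz Cz]] : exists z, ((([set None] `|` (Some @` range a)) `*` Vfan f) `&` C) z.
  apply: clC; exists ([set None] `|` (Some @` range a)), (Vfan f); split => //.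
    by exists (range a).
  by exists f.
have [al [n [ze [aln npal]]]] := CA z Cz.
subst z.
case: Wz => /= HU HV.
have [i ai] : exists i, a i = n.
  case: HU => [//|[m [i _ ai] [mn]]]; exists i; by rewrite ai mn.
have fle : (f al <= n)%N.
  case: HV => [//|[al' [n' [[e1 e2] fle]]]]; by rewrite e1 e2.
have : e (phi (Some n, Some (al, n))) = al.
  have [z' [Cz' ez' az']] := He (phi (Some n, Some (al, n))) (ex_intro _ _ (conj Cz erefl)).
  have zz := phiinj _ _ (mem_set Cz') (mem_set Cz) ez'.
  by rewrite -az' zz.
move=> eal; have ek := Hkf al (ex_intro _ _ eal).
case: (ltnP i (kf al)) => ik.
  have hle := @leq_bigmax _ (fun j : 'I_(kf al) => a j) (Ordinal ik).
  move: fle; rewrite /f -ai /= => /(leq_trans (leq_ltn_trans hle (ltnSn _))).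
  by rewrite ltnn.
case: (Ba i (kf al) ik); rewrite ek //.
by rewrite ai.
Qed.

End UF.

Theorem proposition4p2 (p : set (set nat)) :
  free_ultrafilter p -> selective p ->
  S1_Omega_p p /\
  ~ countably_tight_at (baseProd (baseX p) baseSc) (None, None).
Proof. by move=> Hp Hsel; split; [apply: part1|apply: part2]. Qed.
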